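(* For every $s\in[0,1]$, $$\{(g(s,x),h(s,x)):x\in[a,b]\}=\{(x,w(x)+s\varphi(x)):x\in[a,b]\}.$$
   Context: Let $w\in C^3(\mathbb R)$ be periodic with $w>0$ on $[-1,1]$. Let $-1<a<b<1$ and let $\varphi:[a,b]\to\mathbb R$ be a polynomial with $\varphi^{(k)}(a)=\varphi^{(k)}(b)=0$ for $k=0,1,2,3$, extended by zero outside $[a,b]$. For $x\in\mathbb R$, $(\xi(t,x),\eta(t,x))$ is the unique global solution of $$\frac{d\xi}{dt}=-w'(\xi)\varphi(\xi)-(\eta-w(\xi))\varphi'(\xi),\quad\frac{d\eta}{dt}=\varphi(\xi),\quad \xi(0)=x,\ \eta(0)=w(x).$$ For $s\in[0,1]$, $t_0(s,x)\ge0$ denotes the first time $t\ge0$ with $\eta(t,x)=w(\xi(t,x))+s\varphi(\xi(t,x))$ (it exists). Set $g(s,x)=\xi(t_0(s,x),x)$ and $h(s,x)=\eta(t_0(s,x),x)$. *)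

(* Defs.v *)
From Stdlib Require Import Reals List.
Open Scope R_scope.

(* Evaluation of the real polynomial with coefficient list [c0; c1; ...]
   (c0 + c1 x + c2 x^2 + ...). *)
Definition poly_eval (l : list R) (x : R) : R :=
  fold_right (fun c acc => c + x * acc) 0 l.

(* Main.v *)
Require Import Defs.
From Stdlib Require Import Reals List Lra Lia Psatz.
Open Scope R_scope.

Lemma dplus f g x lf lg l : derivable_pt_lim f x lf -> derivable_pt_lim g x lg ->
  l = lf + lg -> derivable_pt_lim (fun t => f t + g t) x l.
Proof. intros H1 H2 ->. exact (derivable_pt_lim_plus f g x lf lg H1 H2). Qed.
Lemma dminus f g x lf lg l : derivable_pt_lim f x lf -> derivable_pt_lim g x lg ->
  l = lf - lg -> derivable_pt_lim (fun t => f t - g t) x l.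
Proof. intros H1 H2 ->. exact (derivable_pt_lim_minus f g x lf lg H1 H2). Qed.
Lemma dmult f g x lf lg l : derivable_pt_lim f x lf -> derivable_pt_lim g x lg ->
  l = lf * g x + f x * lg -> derivable_pt_lim (fun t => f t * g t) x l.
Proof. intros H1 H2 ->. exact (derivable_pt_lim_mult f g x lf lg H1 H2). Qed.
Lemma dcomp f g x lf lg l : derivable_pt_lim f x lf -> derivable_pt_lim g (f x) lg ->
  l = lg * lf -> derivable_pt_lim (fun t => g (f t)) x l.
Proof. intros H1 H2 ->. exact (derivable_pt_lim_comp f g x lf lg H1 H2). Qed.
Lemma ddiv f g x lf lg l : derivable_pt_lim f x lf -> derivable_pt_lim g x lg -> g x <> 0 ->
  l = (lf * g x - lg * f x) / (g x)² -> derivable_pt_lim (fun t => f t / g t) x l.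
Proof. intros H1 H2 H3 ->. exact (derivable_pt_lim_div f g x lf lg H1 H2 H3). Qed.
Lemma dconst c x l : l = 0 -> derivable_pt_lim (fun _ => c) x l.
Proof. intros ->. exact (derivable_pt_lim_const c x). Qed.
Lemma did x l : l = 1 -> derivable_pt_lim (fun t => t) x l.
Proof. intros ->. exact (derivable_pt_lim_id x). Qed.

Definition cont_on (f : R -> R) p q := forall t, p <= t <= q -> forall eps, 0 < eps ->
  exists del, 0 < del /\ forall t', p <= t' <= q -> Rabs (t' - t) < del -> Rabs (f t' - f t) < eps.

Lemma cont_pt_on f p q : (forall t, p <= t <= q -> continuity_pt f t) -> cont_on f p q.
Proof.
  intros H t Ht eps Heps. destruct (H t Ht eps Heps) as [alp [Ha Hb]].
  exists alp; split; auto. intros t' Ht' Hd.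
  destruct (Req_dec t' t) as [->|Hne]. rewrite Rminus_diag, Rabs_R0; lra.
  apply (Hb t'). split. split; auto. exact I. exact Hd.
Qed.

Lemma deriv_cont_on f f' p q : (forall t, derivable_pt_lim f t (f' t)) -> cont_on f p q.
Proof.
  intros H. apply cont_pt_on. intros t _. apply derivable_continuous_pt. exists (f' t). apply H.
Qed.

Lemma cont_on_sub f p q p' q' : p <= p' -> q' <= q -> cont_on f p q -> cont_on f p' q'.
Proof.
  intros H1 H2 H t Ht eps He. destruct (H t ltac:(lra) eps He) as [d [Hd Hf]].
  exists d; split; auto. intros t' Ht' Hdt. apply Hf; auto; lra.
Qed.

Lemma last_cross f p q c : p < q -> cont_on f p q -> c <= f p -> f q < c ->
  exists r, p <= r < q /\ f r = c /\ forall t, r < t <= q -> f t < c.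
Proof.
  intros Hpq Hc Hp Hq.
  set (E := fun t => p <= t <= q /\ c <= f t).
  assert (HB : bound E). { exists q. intros t [Ht _]. lra. }
  assert (HE : exists t, E t). { exists p. split; lra. }
  destruct (completeness E HB HE) as [r [Hub Hlub]].
  assert (Hpr : p <= r). { apply Hub. split; lra. }
  assert (Hrq : r <= q). { apply Hlub. intros t [Ht _]. lra. }
  assert (Hfr : c <= f r).
  { destruct (Rle_lt_dec c (f r)) as [h|h]; auto.
    destruct (Hc r ltac:(lra) (c - f r) ltac:(lra)) as [d [Hd Hf]].
    assert (Hub' : is_upper_bound E (r - d/2)).
    { intros t [Ht Hft]. destruct (Rle_lt_dec t (r - d/2)) as [h2|h2]; auto.
      assert (t <= r) by (apply Hub; split; auto).
      assert (Hx := Hf t ltac:(lra) ltac:(rewrite Rabs_left1; lra)).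
      apply Rabs_def2 in Hx. lra. }
    assert (Hl := Hlub _ Hub'). lra. }
  assert (Hrq' : r < q). { destruct (Req_dec r q); subst; lra. }
  assert (Hafter : forall t, r < t <= q -> f t < c).
  { intros t Ht. destruct (Rlt_le_dec (f t) c) as [h|h]; auto.
    assert (t <= r) by (apply Hub; split; lra). lra. }
  exists r; split; [lra|split; auto].
  destruct (Req_dec (f r) c) as [h|h]; auto.
  destruct (Hc r ltac:(lra) (f r - c) ltac:(lra)) as [d [Hd Hf]].
  set (t := Rmin (r + d/2) q).
  assert (Ht1 : r < t <= q). { unfold t, Rmin; destruct (Rle_dec _ _); lra. }
  assert (Ht2 : t - r <= d/2). { unfold t, Rmin; destruct (Rle_dec _ _); lra. }
  assert (Hx := Hf t ltac:(lra) ltac:(rewrite Rabs_right; lra)).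
  apply Rabs_def2 in Hx. assert (Hft := Hafter t Ht1). lra.
Qed.

Lemma ivt f p q : p <= q -> cont_on f p q -> f p <= 0 -> 0 <= f q ->
  exists r, p <= r <= q /\ f r = 0.
Proof.
  intros Hpq Hc Hp Hq.
  destruct (Req_dec (f q) 0) as [h|h]. exists q; split; [lra|auto].
  destruct (Req_dec (f p) 0) as [h'|h']. exists p; split; [lra|auto].
  assert (Hpq' : p < q). { destruct (Req_dec p q); subst; lra. }
  destruct (last_cross (fun t => - f t) p q 0 Hpq') as [r [Hr [Hfr _]]]; try lra.
  { intros t Ht eps He. destruct (Hc t Ht eps He) as [d [Hd Hf]]. exists d; split; auto.
    intros t' Ht' Hdt. replace (- f t' - - f t) with (- (f t' - f t)) by ring.
    rewrite Rabs_Ropp. auto. }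
  exists r; split; [lra|lra].
Qed.

Lemma first_cross f p q c : p < q -> cont_on f p q -> c < f p -> f q <= c ->
  exists r, p < r <= q /\ f r = c /\ forall t, p <= t < r -> c < f t.
Proof.
  intros Hpq Hc Hp Hq.
  destruct (last_cross (fun u => - f (- u)) (-q) (-p) (-c)) as [r [Hr [Hfr Haft]]].
  - lra.
  - intros t Ht eps He. destruct (Hc (-t) ltac:(lra) eps He) as [d [Hd Hf]]. exists d; split; auto.
    intros t' Ht' Hdt. replace (- f (- t') - - f (- t)) with (- (f (-t') - f (-t))) by ring.
    rewrite Rabs_Ropp. apply Hf. lra. replace (- t' - - t) with (- (t' - t)) by ring.
    rewrite Rabs_Ropp; auto.
  - rewrite Ropp_involutive; lra.
  - rewrite Ropp_involutive; lra.
  - exists (-r). split; [lra|split]. lra.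
    intros t Ht. assert (H := Haft (-t) ltac:(lra)). rewrite Ropp_involutive in H. lra.
Qed.

Lemma closed_ge f p r : p < r -> cont_on f p r -> (forall t, p <= t < r -> 0 <= f t) -> 0 <= f r.
Proof.
  intros Hpr Hc H. destruct (Rle_lt_dec 0 (f r)) as [h|h]; auto.
  destruct (Hc r ltac:(lra) (- f r) ltac:(lra)) as [d [Hd Hf]].
  set (t := Rmax (r - d/2) p).
  assert (Ht1 : p <= t < r). { unfold t, Rmax; destruct (Rle_dec _ _); lra. }
  assert (Ht2 : r - t <= d/2). { unfold t, Rmax; destruct (Rle_dec _ _); lra. }
  assert (Hx := Hf t ltac:(lra) ltac:(rewrite Rabs_left; lra)).
  apply Rabs_def2 in Hx. assert (H' := H t Ht1). lra.
Qed.

Lemma bnd_cont f p q : p <= q -> (forall t, p <= t <= q -> continuity_pt f t) ->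
  exists M, 0 <= M /\ forall t, p <= t <= q -> Rabs (f t) <= M.
Proof.
  intros Hpq Hc.
  destruct (continuity_ab_maj (fun t => Rabs (f t)) p q Hpq) as [m [Hm _]].
  { intros t Ht. apply (continuity_pt_comp f Rabs). apply Hc; auto. apply Rcontinuity_abs. }
  exists (Rabs (f m)). split. apply Rabs_pos. intros t Ht. apply (Hm t Ht).
Qed.

Lemma lip_deriv f f' p q : p <= q -> (forall x, derivable_pt_lim f x (f' x)) ->
  (forall x, p <= x <= q -> continuity_pt f' x) ->
  exists M L, 0 <= M /\ 0 <= L /\ forall x y, p <= x <= q -> p <= y <= q ->
    Rabs (f x) <= M /\ Rabs (f x - f y) <= L * Rabs (x - y).
Proof.
  intros Hpq Hd Hc.
  destruct (bnd_cont f p q Hpq) as [M [HM0 HM]].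
  { intros t _. apply derivable_continuous_pt. exists (f' t). apply Hd. }
  destruct (bnd_cont f' p q Hpq Hc) as [L [HL0 HL]].
  exists M, L. split; auto. split; auto. intros x y Hx Hy. split; auto.
  assert (Hxy : forall x y, p <= x <= q -> p <= y <= q -> x < y -> Rabs (f x - f y) <= L * Rabs (x - y)).
  { clear x y Hx Hy. intros x y Hx Hy Hlt.
    destruct (MVT_cor2 f f' x y Hlt (fun c _ => Hd c)) as [c [Heq Hc']].
    replace (f x - f y) with (- (f y - f x)) by ring. rewrite Rabs_Ropp, Heq, Rabs_mult.
    replace (x - y) with (- (y - x)) by ring. rewrite Rabs_Ropp.
    apply Rmult_le_compat_r. apply Rabs_pos. apply HL; lra. }
  destruct (Rtotal_order x y) as [h|[h|h]].
  - auto.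
  - subst. rewrite !Rminus_diag, Rabs_R0. lra.
  - replace (f x - f y) with (- (f y - f x)) by ring. replace (x - y) with (- (y - x)) by ring.
    rewrite !Rabs_Ropp. auto.
Qed.

Lemma deriv_loc_eq f g x l1 l2 d : 0 < d -> (forall h, Rabs h < d -> f (x + h) = g (x + h)) ->
  derivable_pt_lim f x l1 -> derivable_pt_lim g x l2 -> l1 = l2.
Proof.
  intros Hd Heq H1 H2. apply (uniqueness_limite g x l1 l2); auto.
  intros eps He. destruct (H1 eps He) as [del Hdel].
  assert (Hm : 0 < Rmin del d) by (apply Rmin_pos; [apply cond_pos|auto]).
  exists (mkposreal _ Hm). intros h Hh0 Hh. simpl in Hh.
  assert (Hfx : f x = g x). { replace x with (x + 0) by ring. apply Heq. rewrite Rabs_R0; auto. }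
  rewrite <- Heq, <- Hfx. apply Hdel; auto.
  apply Rlt_le_trans with (1 := Hh). apply Rmin_l.
  apply Rlt_le_trans with (1 := Hh). apply Rmin_r.
Qed.

Lemma deriv_left_const f x l d : 0 < d -> (forall h, - d < h < 0 -> f (x + h) = f x) ->
  derivable_pt_lim f x l -> l = 0.
Proof.
  intros Hd Heq H. destruct (Req_dec l 0) as [h|h]; auto.
  destruct (H (Rabs l) (Rabs_pos_lt _ h)) as [del Hdel].
  set (k := - (Rmin del d) / 2).
  assert (Hm : 0 < Rmin del d) by (apply Rmin_pos; [apply cond_pos|auto]).
  assert (Hk : - d < k < 0). { unfold k. assert (Rmin del d <= d) by apply Rmin_r. lra. }
  assert (Hk2 : Rabs k < del). { unfold k. rewrite Rabs_left by lra. assert (Rmin del d <= del) by apply Rmin_l. lra. }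
  assert (X := Hdel k ltac:(lra) Hk2). rewrite Heq in X by auto.
  replace ((f x - f x) / k - l) with (- l) in X by (field; lra). rewrite Rabs_Ropp in X. lra.
Qed.

Lemma deriv_right_const f x l d : 0 < d -> (forall h, 0 < h < d -> f (x + h) = f x) ->
  derivable_pt_lim f x l -> l = 0.
Proof.
  intros Hd Heq H. destruct (Req_dec l 0) as [h|h]; auto.
  destruct (H (Rabs l) (Rabs_pos_lt _ h)) as [del Hdel].
  set (k := (Rmin del d) / 2).
  assert (Hm : 0 < Rmin del d) by (apply Rmin_pos; [apply cond_pos|auto]).
  assert (Hk : 0 < k < d). { unfold k. assert (Rmin del d <= d) by apply Rmin_r. lra. }
  assert (Hk2 : Rabs k < del). { unfold k. rewrite Rabs_right by lra. assert (Rmin del d <= del) by apply Rmin_l. lra. }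
  assert (X := Hdel k ltac:(lra) Hk2). rewrite Heq in X by auto.
  replace ((f x - f x) / k - l) with (- l) in X by (field; lra). rewrite Rabs_Ropp in X. lra.
Qed.

Lemma sq_abs_le u v L : 0 <= L -> u * u <= L * L * (v * v) -> Rabs u <= L * Rabs v.
Proof.
  intros HL H. destruct (Rle_lt_dec (Rabs u) (L * Rabs v)) as [h|h]; auto.
  assert (Rabs u * Rabs u <= (L * Rabs v) * (L * Rabs v)).
  { rewrite <- Rabs_mult. replace (L * Rabs v * (L * Rabs v)) with (L*L*(v*v)).
    rewrite Rabs_right; [lra|]. apply Rle_ge; nra.
    replace (L * Rabs v * (L * Rabs v)) with (L*L*(Rabs v * Rabs v)) by ring.
    rewrite <- Rabs_mult, Rabs_right. auto. apply Rle_ge; nra. }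
  assert (0 <= L * Rabs v) by (apply Rmult_le_pos; auto; apply Rabs_pos). nra.
Qed.

Lemma key_ineq a b p q L : 0 <= L -> Rabs p <= L * (Rabs a + Rabs b) -> Rabs q <= L * Rabs a ->
  Rabs (2 * a * p + 2 * b * q) <= 4 * L * (a * a + b * b).
Proof.
  intros HL Hp Hq.
  assert (H1 : Rabs (2 * a * p + 2 * b * q) <= 2 * Rabs a * Rabs p + 2 * Rabs b * Rabs q).
  { eapply Rle_trans. apply Rabs_triang. rewrite !Rabs_mult. rewrite (Rabs_right 2) by lra. lra. }
  assert (Ha : a * a = Rabs a * Rabs a) by (rewrite <- Rabs_mult; rewrite Rabs_right; [auto| apply Rle_ge; nra]).
  assert (Hb : b * b = Rabs b * Rabs b) by (rewrite <- Rabs_mult; rewrite Rabs_right; [auto| apply Rle_ge; nra]).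
  rewrite Ha, Hb. set (A := Rabs a) in *. set (B := Rabs b) in *.
  assert (0 <= A) by apply Rabs_pos. assert (0 <= B) by apply Rabs_pos.
  assert (0 <= Rabs p) by apply Rabs_pos. assert (0 <= Rabs q) by apply Rabs_pos.
  assert (A * Rabs p <= A * (L * (A + B))) by (apply Rmult_le_compat_l; auto).
  assert (B * Rabs q <= B * (L * A)) by (apply Rmult_le_compat_l; auto).
  assert (0 <= L * ((A - B) * (A - B))).
  { apply Rmult_le_pos; auto. pose proof (Rle_0_sqr (A - B)) as Hs. unfold Rsqr in Hs. exact Hs. }
  nra.
Qed.

Lemma mono_le h h' T : 0 < T -> (forall t, derivable_pt_lim h t (h' t)) ->
  (forall t, 0 <= t <= T -> h' t <= 0) -> forall t, 0 <= t <= T -> h t <= h 0.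
Proof.
  intros HT Hd Hn t Ht. destruct (Req_dec t 0) as [->|Hne]. lra.
  destruct (MVT_cor2 h h' 0 t ltac:(lra) (fun c _ => Hd c)) as [c [Heq Hc]].
  assert (h' c <= 0) by (apply Hn; lra). nra.
Qed.

Lemma gronwall (x1 y1 x2 y2 dx1 dy1 dx2 dy2 : R -> R) L T : 0 < T -> 0 <= L ->
  (forall t, derivable_pt_lim x1 t (dx1 t)) -> (forall t, derivable_pt_lim y1 t (dy1 t)) ->
  (forall t, derivable_pt_lim x2 t (dx2 t)) -> (forall t, derivable_pt_lim y2 t (dy2 t)) ->
  (forall t, 0 <= t <= T -> Rabs (dx1 t - dx2 t) <= L * (Rabs (x1 t - x2 t) + Rabs (y1 t - y2 t)) /\
                            Rabs (dy1 t - dy2 t) <= L * Rabs (x1 t - x2 t)) ->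
  forall t, 0 <= t <= T ->
    let E := fun t => (x1 t - x2 t) * (x1 t - x2 t) + (y1 t - y2 t) * (y1 t - y2 t) in
    E t <= E 0 * exp (4 * L * T) /\ E 0 <= E t * exp (4 * L * T).
Proof.
  intros HT HL H1 H2 H3 H4 Hlip t Ht E.
  set (E' := fun t => 2 * (x1 t - x2 t) * (dx1 t - dx2 t) + 2 * (y1 t - y2 t) * (dy1 t - dy2 t)).
  assert (HE : forall t, derivable_pt_lim E t (E' t)).
  { intros u. unfold E, E'. apply dplus with (lf := 2 * (x1 u - x2 u) * (dx1 u - dx2 u)) (lg := 2 * (y1 u - y2 u) * (dy1 u - dy2 u)); [| |ring].
    - apply dmult with (lf := dx1 u - dx2 u) (lg := dx1 u - dx2 u); [apply dminus with (lf := dx1 u) (lg := dx2 u); auto|apply dminus with (lf := dx1 u) (lg := dx2 u); auto|ring].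
    - apply dmult with (lf := dy1 u - dy2 u) (lg := dy1 u - dy2 u); [apply dminus with (lf := dy1 u) (lg := dy2 u); auto|apply dminus with (lf := dy1 u) (lg := dy2 u); auto|ring]. }
  assert (Hkey : forall u, 0 <= u <= T -> Rabs (E' u) <= 4 * L * E u).
  { intros u Hu. destruct (Hlip u Hu). unfold E', E. apply key_ineq; auto. }
  assert (HE0 : forall u, 0 <= E u) by (intros u; unfold E; apply Rplus_le_le_0_compat; apply Rle_0_sqr).
  assert (Hexp : forall u, derivable_pt_lim (fun t => exp (4 * L * t)) u (exp (4 * L * u) * (4 * L))).
  { intros u. apply dcomp with (f := fun t => 4 * L * t) (g := exp) (lf := 4 * L) (lg := exp (4 * L * u)); [|apply derivable_pt_lim_exp|ring].
    apply dmult with (f := fun _ => 4 * L) (g := fun t => t) (lf := 0) (lg := 1); [apply dconst; auto|apply did; auto|ring]. }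
  assert (Hexpm : forall u, derivable_pt_lim (fun t => exp (- (4 * L) * t)) u (exp (- (4 * L) * u) * (- (4 * L)))).
  { intros u. apply dcomp with (f := fun t => - (4 * L) * t) (g := exp) (lf := - (4 * L)) (lg := exp (- (4 * L) * u)); [|apply derivable_pt_lim_exp|ring].
    apply dmult with (f := fun _ => - (4 * L)) (g := fun t => t) (lf := 0) (lg := 1); [apply dconst; auto|apply did; auto|ring]. }
  assert (Hmono : exp (4 * L * t) <= exp (4 * L * T)).
  { assert (4 * L * t <= 4 * L * T) by (apply Rmult_le_compat_l; lra).
    destruct (Rle_lt_dec (4*L*T) (4*L*t)) as [h|h]; [right; f_equal; lra | left; apply exp_increasing; exact h]. }
  assert (Hpos1 := exp_pos (4 * L * t)). assert (Hpos2 := exp_pos (- (4 * L) * t)).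
  assert (Hinv : exp (- (4 * L) * t) * exp (4 * L * t) = 1).
  { rewrite <- exp_plus. replace (- (4 * L) * t + 4 * L * t) with 0 by ring. apply exp_0. }
  assert (Hb1 : forall u, 0 <= u <= T -> E' u <= 4 * L * E u).
  { intros u Hu. eapply Rle_trans. apply Rle_abs. auto. }
  assert (Hb2 : forall u, 0 <= u <= T -> - (4 * L * E u) <= E' u).
  { intros u Hu. assert (- E' u <= 4 * L * E u); [|lra]. eapply Rle_trans. apply Rle_abs. rewrite Rabs_Ropp. auto. }
  split.
  - pose (h := fun u => E u * exp (- (4 * L) * u)).
    assert (X : h t <= h 0).
    { apply (mono_le h (fun u => E' u * exp (- (4 * L) * u) + E u * (exp (- (4 * L) * u) * (- (4 * L)))) T HT); auto.
      - intros u. unfold h. apply (dmult E (fun u => exp (- (4 * L) * u)) u (E' u) (exp (- (4 * L) * u) * - (4 * L))); auto.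
      - intros u Hu. assert (Hk := Hb1 u Hu). assert (Hp := exp_pos (- (4 * L) * u)). nra. }
    unfold h in X. replace (- (4 * L) * 0) with 0 in X by ring. rewrite exp_0 in X.
    assert (E t = E t * exp (- (4 * L) * t) * exp (4 * L * t)) by (rewrite Rmult_assoc, Hinv; ring).
    assert (0 <= E 0) by auto. nra.
  - pose (h := fun u => - (E u * exp (4 * L * u))).
    assert (X : h t <= h 0).
    { apply (mono_le h (fun u => - (E' u * exp (4 * L * u) + E u * (exp (4 * L * u) * (4 * L)))) T HT); auto.
      - intros u. unfold h. apply derivable_pt_lim_opp with (f := fun u => E u * exp (4 * L * u)). apply (dmult E (fun u => exp (4 * L * u)) u (E' u) (exp (4 * L * u) * (4 * L))); auto.
      - intros u Hu. assert (Hk := Hb2 u Hu). assert (Hp := exp_pos (4 * L * u)). nra. }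
    unfold h in X. replace (4 * L * 0) with 0 in X by ring. rewrite exp_0 in X.
    assert (0 <= E t) by auto. nra.
Qed.

Lemma stay_gen f f' p : (forall t, derivable_pt_lim f t (f' t)) -> (forall t, f t < p -> f' t = 0) ->
  p <= f 0 -> forall t, 0 <= t -> p <= f t.
Proof.
  intros Hd Hz H0 t Ht. destruct (Rle_lt_dec p (f t)) as [h|h]; auto.
  assert (Ht' : 0 < t). { destruct (Req_dec t 0) as [->|]; lra. }
  destruct (last_cross f 0 t p Ht' (deriv_cont_on f f' 0 t Hd) H0 h) as [r [Hr [Hfr Haft]]].
  destruct (MVT_cor2 f f' r t ltac:(lra) (fun c _ => Hd c)) as [c [Heq Hc]].
  rewrite (Hz c (Haft c ltac:(lra))) in Heq. lra.
Qed.
Section Main.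
Variables w dw d2w d3w : R -> R.
Hypothesis Hdw : forall x, derivable_pt_lim w x (dw x).
Hypothesis Hd2w : forall x, derivable_pt_lim dw x (d2w x).
Hypothesis Hd3w : forall x, derivable_pt_lim d2w x (d3w x).
Variables a b : R.
Hypothesis Hab : -1 < a /\ a < b /\ b < 1.
Variables phi dphi P0 P1 P2 P3 : R -> R.
Hypothesis Hphi_in : forall x, a <= x <= b -> phi x = P0 x.
Hypothesis Hphi_out : forall x, (x < a \/ b < x) -> phi x = 0.
Hypothesis HP1 : forall x, derivable_pt_lim P0 x (P1 x).
Hypothesis HP2 : forall x, derivable_pt_lim P1 x (P2 x).
Hypothesis HP3 : forall x, derivable_pt_lim P2 x (P3 x).
Hypothesis HP0a : P0 a = 0.
Hypothesis HP1a : P1 a = 0.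
Hypothesis HP0b : P0 b = 0.
Hypothesis HP1b : P1 b = 0.
Hypothesis Hdphi : forall x, derivable_pt_lim phi x (dphi x).

Definition V1 p q := - dw p * phi p - (q - w p) * dphi p.

Lemma dphi_out x : x < a \/ b < x -> dphi x = 0.
Proof.
  intros Hx. destruct Hx as [Hx|Hx].
  - apply (deriv_loc_eq phi (fun _ => 0) x (dphi x) 0 (a - x)); auto. lra.
    intros h Hh. apply Rabs_def2 in Hh. apply Hphi_out; lra. apply dconst; auto.
  - apply (deriv_loc_eq phi (fun _ => 0) x (dphi x) 0 (x - b)); auto. lra.
    intros h Hh. apply Rabs_def2 in Hh. apply Hphi_out; lra. apply dconst; auto.
Qed.

Lemma dphi_in x : a <= x <= b -> dphi x = P1 x.
Proof.
  intros Hx. destruct (Req_dec x a) as [->|Ha].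
  - rewrite HP1a. apply (deriv_left_const phi a (dphi a) 1); auto. lra.
    intros h Hh. rewrite Hphi_out by lra. rewrite Hphi_in by lra. auto.
  - destruct (Req_dec x b) as [->|Hb].
    + rewrite HP1b. apply (deriv_right_const phi b (dphi b) 1); auto. lra.
      intros h Hh. rewrite Hphi_out by lra. rewrite Hphi_in by lra. auto.
    + apply (deriv_loc_eq phi P0 x (dphi x) (P1 x) (Rmin (x - a) (b - x))); auto.
      apply Rmin_pos; lra.
      intros h Hh. apply Rabs_def2 in Hh. assert (Rmin (x - a) (b - x) <= x - a) by apply Rmin_l.
      assert (Rmin (x - a) (b - x) <= b - x) by apply Rmin_r. apply Hphi_in; lra.
Qed.

Lemma cont_of f f' : (forall x, derivable_pt_lim f x (f' x)) -> forall x, continuity_pt f x.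
Proof. intros H x. apply derivable_continuous_pt. exists (f' x). apply H. Qed.

Lemma bounds : exists Mw Lw Mdw Ldw Mp Lp Md Ld,
  0 <= Mw /\ 0 <= Lw /\ 0 <= Mdw /\ 0 <= Ldw /\ 0 <= Mp /\ 0 <= Lp /\ 0 <= Md /\ 0 <= Ld /\
  forall x y, a <= x <= b -> a <= y <= b ->
   (Rabs (w x) <= Mw /\ Rabs (w x - w y) <= Lw * Rabs (x - y)) /\
   (Rabs (dw x) <= Mdw /\ Rabs (dw x - dw y) <= Ldw * Rabs (x - y)) /\
   (Rabs (phi x) <= Mp /\ Rabs (phi x - phi y) <= Lp * Rabs (x - y)) /\
   (Rabs (dphi x) <= Md /\ Rabs (dphi x - dphi y) <= Ld * Rabs (x - y)).
Proof.
  assert (Hab' : a <= b) by lra.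
  destruct (lip_deriv w dw a b Hab' Hdw (fun x _ => cont_of _ _ Hd2w x)) as [Mw [Lw [? [? Hw]]]].
  destruct (lip_deriv dw d2w a b Hab' Hd2w (fun x _ => cont_of _ _ Hd3w x)) as [Mdw [Ldw [? [? Hdw']]]].
  destruct (lip_deriv P0 P1 a b Hab' HP1 (fun x _ => cont_of _ _ HP2 x)) as [Mp [Lp [? [? Hp]]]].
  destruct (lip_deriv P1 P2 a b Hab' HP2 (fun x _ => cont_of _ _ HP3 x)) as [Md [Ld [? [? Hd]]]].
  exists Mw, Lw, Mdw, Ldw, Mp, Lp, Md, Ld. do 8 (split; [assumption|]).
  intros x y Hx Hy. split; [|split; [|split]].
  - apply Hw; auto.
  - apply Hdw'; auto.
  - rewrite !Hphi_in by auto; apply Hp; auto.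
  - rewrite !dphi_in by auto; apply Hd; auto.
Qed.


Lemma prod_bnd x y X Y : Rabs x <= X -> Rabs y <= Y -> Rabs (x*y) <= X*Y.
Proof. intros H1 H2. rewrite Rabs_mult. apply Rmult_le_compat; auto; apply Rabs_pos. Qed.

Section Inner.
Variables Mw Lw Mdw Ldw Mp Lp Md Ld : R.
Hypothesis Hpos : 0 <= Mw /\ 0 <= Lw /\ 0 <= Mdw /\ 0 <= Ldw /\ 0 <= Mp /\ 0 <= Lp /\ 0 <= Md /\ 0 <= Ld.
Hypothesis Hb : forall x y, a <= x <= b -> a <= y <= b ->
   (Rabs (w x) <= Mw /\ Rabs (w x - w y) <= Lw * Rabs (x - y)) /\
   (Rabs (dw x) <= Mdw /\ Rabs (dw x - dw y) <= Ldw * Rabs (x - y)) /\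
   (Rabs (phi x) <= Mp /\ Rabs (phi x - phi y) <= Lp * Rabs (x - y)) /\
   (Rabs (dphi x) <= Md /\ Rabs (dphi x - dphi y) <= Ld * Rabs (x - y)).

Definition K := Mw + 2 * Mp.
Definition L0 := Ldw * Mp + Mdw * Lp + (K + Mw) * Ld + Lw * Md.
Definition LV := L0 + Md + Lp.

Lemma LV_pos : 0 <= LV.
Proof.
  destruct Hpos as [? [? [? [? [? [? [? ?]]]]]]]. unfold LV, L0, K.
  assert (0 <= Ldw * Mp) by (apply Rmult_le_pos; auto).
  assert (0 <= Mdw * Lp) by (apply Rmult_le_pos; auto).
  assert (0 <= (Mw + 2 * Mp + Mw) * Ld) by (apply Rmult_le_pos; lra).
  assert (0 <= Lw * Md) by (apply Rmult_le_pos; auto). lra.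
Qed.

Lemma phi_bnd x : Rabs (phi x) <= Mp.
Proof.
  destruct (Rlt_dec x a) as [h|h]. rewrite Hphi_out by auto. rewrite Rabs_R0; lra.
  destruct (Rlt_dec b x) as [h'|h']. rewrite Hphi_out by auto. rewrite Rabs_R0; lra.
  apply (Hb x x); lra.
Qed.

Lemma V_lip p1 q1 p2 q2 : a <= p1 <= b -> a <= p2 <= b -> Rabs q1 <= K -> Rabs q2 <= K ->
  Rabs (V1 p1 q1 - V1 p2 q2) <= LV * (Rabs (p1 - p2) + Rabs (q1 - q2)) /\
  Rabs (phi p1 - phi p2) <= LV * Rabs (p1 - p2).
Proof.
  intros H1 H2 Hq1 Hq2.
  destruct Hpos as [? [? [? [? [? [? [? ?]]]]]]].
  destruct (Hb p1 p2 H1 H2) as [[Hw1 Hw12] [[Hdw1 Hdw12] [[Hp1 Hp12] [Hd1 Hd12]]]].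
  destruct (Hb p2 p1 H2 H1) as [[Hw2 _] [[Hdw2 _] [[Hp2 _] [Hd2 _]]]].
  set (D := Rabs (p1 - p2)) in *. set (Q := Rabs (q1 - q2)) in *.
  assert (0 <= D) by apply Rabs_pos. assert (0 <= Q) by apply Rabs_pos.
  split.
  - replace (V1 p1 q1 - V1 p2 q2) with
      (- ((dw p1 - dw p2) * phi p1 + dw p2 * (phi p1 - phi p2))
       - ((q1 - w p1) * (dphi p1 - dphi p2) + ((q1 - q2) - (w p1 - w p2)) * dphi p2))
      by (unfold V1; ring).
    assert (A1 := prod_bnd _ _ _ _ Hdw12 Hp1).
    assert (A2 := prod_bnd _ _ _ _ Hdw2 Hp12).
    assert (Hqw : Rabs (q1 - w p1) <= K + Mw).
    { replace (q1 - w p1) with (q1 + - w p1) by ring.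
      eapply Rle_trans. apply Rabs_triang. rewrite Rabs_Ropp. lra. }
    assert (A3 := prod_bnd _ _ _ _ Hqw Hd12).
    assert (Hqq : Rabs ((q1 - q2) - (w p1 - w p2)) <= Q + Lw * D).
    { replace ((q1 - q2) - (w p1 - w p2)) with ((q1 - q2) + - (w p1 - w p2)) by ring.
      eapply Rle_trans. apply Rabs_triang. rewrite Rabs_Ropp. fold Q. lra. }
    assert (A4 := prod_bnd _ _ _ _ Hqq Hd2).
    eapply Rle_trans. apply Rabs_triang. rewrite Rabs_Ropp, Rabs_Ropp.
    eapply Rle_trans. apply Rplus_le_compat; apply Rabs_triang.
    assert (0 <= Ldw * Mp) by (apply Rmult_le_pos; auto).
    assert (0 <= Mdw * Lp) by (apply Rmult_le_pos; auto).
    assert (0 <= (K + Mw) * Ld) by (apply Rmult_le_pos; unfold K; lra).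
    assert (0 <= Lw * Md) by (apply Rmult_le_pos; auto).
    unfold LV, L0. fold D Q in A1, A2, A3, A4. nra.
  - assert (0 <= L0) by (unfold L0; assert (0 <= Ldw * Mp) by (apply Rmult_le_pos; auto);
      assert (0 <= Mdw * Lp) by (apply Rmult_le_pos; auto);
      assert (0 <= (K + Mw) * Ld) by (apply Rmult_le_pos; unfold K; lra);
      assert (0 <= Lw * Md) by (apply Rmult_le_pos; auto); lra).
    fold D. unfold LV. nra.
Qed.


Variables xi eta : R -> R -> R.
Hypothesis Hxi : forall x t, derivable_pt_lim (fun t => xi t x) t
           (- dw (xi t x) * phi (xi t x) - (eta t x - w (xi t x)) * dphi (xi t x)).
Hypothesis Heta : forall x t, derivable_pt_lim (fun t => eta t x) t (phi (xi t x)).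
Hypothesis Hxi0 : forall x, xi 0 x = x.
Hypothesis Heta0 : forall x, eta 0 x = w x.

Lemma stay x t : a <= x <= b -> 0 <= t -> a <= xi t x <= b.
Proof.
  intros Hx Ht. split.
  - apply (stay_gen (fun t => xi t x) (fun t => - dw (xi t x) * phi (xi t x) - (eta t x - w (xi t x)) * dphi (xi t x)) a); auto.
    + intros u Hu. rewrite Hphi_out, dphi_out by lra. ring.
    + rewrite Hxi0; lra.
  - assert (H := stay_gen (fun t => - xi t x) (fun t => - (- dw (xi t x) * phi (xi t x) - (eta t x - w (xi t x)) * dphi (xi t x))) (- b)).
    assert (- b <= - xi t x); [|lra]. apply H; auto.
    + intros u. apply derivable_pt_lim_opp with (f := fun t => xi t x). auto.
    + intros u Hu. rewrite Hphi_out, dphi_out by lra. ring.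
    + rewrite Hxi0; lra.
Qed.

Definition sol (X Y : R -> R) := (forall t, derivable_pt_lim X t (V1 (X t) (Y t))) /\
  (forall t, derivable_pt_lim Y t (phi (X t))) /\
  (forall t, 0 <= t <= 2 -> a <= X t <= b /\ Rabs (Y t) <= K).

Definition CG := exp (4 * LV * 2).

Lemma CG_ge1 : 1 <= CG.
Proof.
  unfold CG. assert (H := LV_pos). destruct (Req_dec LV 0) as [->|h].
  replace (4 * 0 * 2) with 0 by ring. rewrite exp_0; lra.
  left. rewrite <- exp_0. apply exp_increasing. lra.
Qed.

Lemma sol_gron X1 Y1 X2 Y2 : sol X1 Y1 -> sol X2 Y2 -> forall t, 0 <= t <= 2 ->
  (X1 t - X2 t) * (X1 t - X2 t) + (Y1 t - Y2 t) * (Y1 t - Y2 t) <=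
    ((X1 0 - X2 0) * (X1 0 - X2 0) + (Y1 0 - Y2 0) * (Y1 0 - Y2 0)) * CG /\
  (X1 0 - X2 0) * (X1 0 - X2 0) + (Y1 0 - Y2 0) * (Y1 0 - Y2 0) <=
    ((X1 t - X2 t) * (X1 t - X2 t) + (Y1 t - Y2 t) * (Y1 t - Y2 t)) * CG.
Proof.
  intros [D1 [E1 R1]] [D2 [E2 R2]] t Ht.
  apply (gronwall X1 Y1 X2 Y2 (fun t => V1 (X1 t) (Y1 t)) (fun t => phi (X1 t))
     (fun t => V1 (X2 t) (Y2 t)) (fun t => phi (X2 t)) LV 2); auto. lra. apply LV_pos.
  intros u Hu. destruct (R1 u Hu), (R2 u Hu). apply V_lip; auto.
Qed.

Lemma eta_bnd x t : a <= x <= b -> 0 <= t <= 2 -> Rabs (eta t x) <= K.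
Proof.
  intros Hx Ht. destruct Hpos as [? [? [? [? [? [? [? ?]]]]]]].
  assert (Hw := proj1 (proj1 (Hb x x Hx Hx))).
  unfold K. destruct (Req_dec t 0) as [->|h]. rewrite Heta0. lra.
  destruct (MVT_cor2 (fun t => eta t x) (fun t => phi (xi t x)) 0 t ltac:(lra) (fun c _ => Heta x c)) as [c [Heq Hc]].
  rewrite Heta0 in Heq. replace (eta t x) with (w x + phi (xi c x) * (t - 0)) by lra.
  eapply Rle_trans. apply Rabs_triang. rewrite Rabs_mult.
  assert (Hp := phi_bnd (xi c x)). rewrite (Rabs_right (t - 0)) by lra.
  assert (Rabs (phi (xi c x)) * (t - 0) <= Mp * 2) by (apply Rmult_le_compat; try lra; apply Rabs_pos).
  lra.
Qed.

Lemma traj_sol x : a <= x <= b -> sol (fun t => xi t x) (fun t => eta t x).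
Proof.
  intros Hx. split; [|split].
  - intros t. apply Hxi.
  - intros t. apply Heta.
  - intros t Ht. split. apply stay; lra. apply eta_bnd; auto.
Qed.

Lemma const_sol z : a <= z <= b -> phi z = 0 -> sol (fun _ => z) (fun _ => w z).
Proof.
  intros Hz Hp. destruct Hpos as [? [? [? [? [? [? [? ?]]]]]]]. split; [|split].
  - intros t. apply dconst. unfold V1. rewrite Hp. ring.
  - intros t. apply dconst. auto.
  - intros t Ht. split; auto. assert (Hw := proj1 (proj1 (Hb z z Hz Hz))). unfold K; lra.
Qed.


Lemma sq0 u v : u * u + v * v <= 0 -> u = 0 /\ v = 0.
Proof. intros H. assert (0 <= u*u) by apply Rle_0_sqr. assert (0 <= v*v) by apply Rle_0_sqr. split; nra. Qed.

Lemma uniq_back x z t : a <= x <= b -> a <= z <= b -> phi z = 0 -> 0 <= t <= 2 ->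
  xi t x = z -> eta t x = w z -> x = z.
Proof.
  intros Hx Hz Hp Ht H1 H2.
  destruct (sol_gron _ _ _ _ (traj_sol x Hx) (const_sol z Hz Hp) t Ht) as [_ H].
  simpl in H. rewrite H1, H2, Hxi0, Heta0 in H.
  replace ((z - z) * (z - z) + (w z - w z) * (w z - w z)) with 0 in H by ring.
  rewrite Rmult_0_l in H. apply sq0 in H. lra.
Qed.

Lemma stationary x t : a <= x <= b -> phi x = 0 -> 0 <= t <= 2 -> xi t x = x /\ eta t x = w x.
Proof.
  intros Hx Hp Ht.
  destruct (sol_gron _ _ _ _ (traj_sol x Hx) (const_sol x Hx Hp) t Ht) as [H _].
  simpl in H. rewrite Hxi0, Heta0 in H.
  replace ((x - x) * (x - x) + (w x - w x) * (w x - w x)) with 0 in H by ring.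
  rewrite Rmult_0_l in H. apply sq0 in H. lra.
Qed.

Definition Lam := CG * (1 + Lw * Lw) + 1.

Lemma Lam_ge1 : 1 <= Lam.
Proof.
  unfold Lam. assert (H := CG_ge1). destruct Hpos as [? [? _]].
  assert (0 <= Lw * Lw) by apply Rle_0_sqr. assert (0 <= CG * (1 + Lw * Lw)) by (apply Rmult_le_pos; lra). lra.
Qed.

Lemma unif_lip x x' t : a <= x <= b -> a <= x' <= b -> 0 <= t <= 2 ->
  Rabs (xi t x - xi t x') <= Lam * Rabs (x - x') /\ Rabs (eta t x - eta t x') <= Lam * Rabs (x - x').
Proof.
  intros Hx Hx' Ht.
  destruct (sol_gron _ _ _ _ (traj_sol x Hx) (traj_sol x' Hx') t Ht) as [H _].
  simpl in H. rewrite !Hxi0, !Heta0 in H.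
  assert (Hwl := proj2 (proj1 (Hb x x' Hx Hx'))).
  destruct Hpos as [? [HLw _]].
  set (u := x - x') in *. set (v := w x - w x') in *.
  assert (Hv : v * v <= Lw * Lw * (u * u)).
  { assert (Habs : Rabs v * Rabs v <= (Lw * Rabs u) * (Lw * Rabs u)).
    { apply Rmult_le_compat; auto; apply Rabs_pos. }
    rewrite <- !Rabs_mult in Habs. rewrite Rabs_right in Habs by (apply Rle_ge, Rle_0_sqr).
    replace (Lw * Rabs u * (Lw * Rabs u)) with (Lw * Lw * (Rabs u * Rabs u)) in Habs by ring.
    rewrite <- Rabs_mult, Rabs_right in Habs by (apply Rle_ge, Rle_0_sqr). exact Habs. }
  assert (HCG := CG_ge1). assert (HL := Lam_ge1).
  assert (Huu : 0 <= u * u) by apply Rle_0_sqr.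
  assert (Hbig : (u * u + v * v) * CG <= Lam * Lam * (u * u)).
  { assert ((u * u + v * v) * CG <= CG * (1 + Lw * Lw) * (u * u)) by nra.
    assert (CG * (1 + Lw * Lw) <= Lam * Lam) by (unfold Lam in *; nra). nra. }
  set (A := xi t x - xi t x') in *. set (B := eta t x - eta t x') in *.
  assert (0 <= A * A) by apply Rle_0_sqr. assert (0 <= B * B) by apply Rle_0_sqr.
  split; apply sq_abs_le; lra.
Qed.


Lemma d_phiT x t : derivable_pt_lim (fun t => phi (xi t x)) t (dphi (xi t x) * V1 (xi t x) (eta t x)).
Proof. apply (dcomp (fun t => xi t x) phi t (V1 (xi t x) (eta t x)) (dphi (xi t x))); auto. Qed.

Lemma d_wT x t : derivable_pt_lim (fun t => w (xi t x)) t (dw (xi t x) * V1 (xi t x) (eta t x)).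
Proof. apply (dcomp (fun t => xi t x) w t (V1 (xi t x) (eta t x)) (dw (xi t x))); auto. Qed.

Definition FT x t := eta t x - w (xi t x).
Definition dFT x t := phi (xi t x) - dw (xi t x) * V1 (xi t x) (eta t x).
Lemma d_FT x t : derivable_pt_lim (FT x) t (dFT x t).
Proof. unfold FT, dFT. apply dminus with (lf := phi (xi t x)) (lg := dw (xi t x) * V1 (xi t x) (eta t x)); auto. apply d_wT. Qed.

Variable t0 : R -> R -> R.
Variable s : R.
Hypothesis Hs : 0 <= s <= 1.
Hypothesis Ht0 : forall s x, 0 <= s <= 1 -> a <= x <= b ->
      0 <= t0 s x /\
      eta (t0 s x) x = w (xi (t0 s x) x) + s * phi (xi (t0 s x) x) /\
      (forall t, 0 <= t < t0 s x -> eta t x <> w (xi t x) + s * phi (xi t x)).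

Definition G x t := FT x t - s * phi (xi t x).
Definition dG x t := dFT x t - s * (dphi (xi t x) * V1 (xi t x) (eta t x)).
Lemma d_G x t : derivable_pt_lim (G x) t (dG x t).
Proof.
  unfold G, dG. apply dminus with (lf := dFT x t) (lg := s * (dphi (xi t x) * V1 (xi t x) (eta t x))).
  apply d_FT. apply (derivable_pt_lim_scal (fun t => phi (xi t x))). apply d_phiT. ring.
Qed.

Lemma t0_zero x : a <= x <= b -> phi x = 0 \/ s = 0 -> t0 s x = 0.
Proof.
  intros Hx Hz. destruct (Ht0 s x Hs Hx) as [H1 [_ H3]].
  destruct (Req_dec (t0 s x) 0) as [h|h]; auto. exfalso.
  apply (H3 0). lra. rewrite Hxi0, Heta0. destruct Hz as [Hz|Hz]; rewrite Hz; ring.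
Qed.

Lemma G_sign x : a <= x <= b -> 0 < s -> phi x <> 0 ->
  forall t, 0 <= t < t0 s x -> G x t * phi x < 0.
Proof.
  intros Hx Hs0 Hp t Ht. destruct (Rlt_le_dec (G x t * phi x) 0) as [h|h]; auto. exfalso.
  destruct (ivt (fun u => G x u * phi x) 0 t) as [r [Hr Hfr]]; try lra.
  - apply (deriv_cont_on _ (fun u => dG x u * phi x)). intros u.
    apply (dmult (G x) (fun _ => phi x) u (dG x u) 0). apply d_G. apply dconst; auto. ring.
  - unfold G, FT. rewrite Hxi0, Heta0. assert (0 < phi x * phi x) by (apply Rsqr_pos_lt; auto).
    assert (0 < s * (phi x * phi x)) by (apply Rmult_lt_0_compat; auto). nra.
  - destruct (Ht0 s x Hs Hx) as [_ [_ H3]]. apply (H3 r). lra.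
    apply Rmult_integral in Hfr. destruct Hfr as [Hfr|Hfr]; [|contradiction].
    unfold G, FT in Hfr. lra.
Qed.


Lemma sigma_facts x r : a <= x <= b -> 0 < s -> phi x <> 0 -> 0 < r -> r <= t0 s x -> r <= 2 ->
  (forall u, 0 <= u < r -> 0 < phi (xi u x) * phi x) ->
  forall u, 0 <= u < r -> u <= FT x u / phi (xi u x) < s.
Proof.
  intros Hx Hs0 Hp Hr Hr1 Hr2 Hpos' u Hu.
  assert (Hnz : forall c, 0 <= c < r -> phi (xi c x) <> 0).
  { intros c Hc H. assert (Z := Hpos' c Hc). rewrite H in Z. lra. }
  set (sg := fun t => FT x t / phi (xi t x)).
  set (sg' := fun t => (dFT x t * phi (xi t x) - dphi (xi t x) * V1 (xi t x) (eta t x) * FT x t) / (phi (xi t x))²).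
  assert (Hd : forall c, 0 <= c < r -> derivable_pt_lim sg c (sg' c)).
  { intros c Hc. unfold sg, sg'. apply ddiv with (lf := dFT x c) (lg := dphi (xi c x) * V1 (xi c x) (eta c x)); auto.
    apply d_FT. apply d_phiT. }
  assert (Hge : forall c, 0 <= c < r -> 1 <= sg' c).
  { intros c Hc. unfold sg', dFT. assert (Hn := Hnz c Hc).
    set (p := phi (xi c x)) in *. set (V := V1 (xi c x) (eta c x)).
    assert (HV : V = - dw (xi c x) * p - FT x c * dphi (xi c x)) by (unfold V, V1, FT, p; ring).
    assert (E : ((p - dw (xi c x) * V) * p - dphi (xi c x) * V * FT x c) / p² = 1 + (V / p) * (V / p)).
    { unfold Rsqr. field_simplify; auto. rewrite HV. field; auto. }
    rewrite E. assert (0 <= (V/p) * (V/p)) by apply Rle_0_sqr. lra. }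
  split.
  - destruct (Req_dec u 0) as [->|hu].
    + unfold FT. rewrite Hxi0, Heta0. unfold Rdiv. rewrite Rminus_diag, Rmult_0_l. lra.
    + destruct (MVT_cor2 sg sg' 0 u ltac:(lra) (fun c Hc => Hd c ltac:(lra))) as [c [Heq Hc]].
      assert (H0 : sg 0 = 0). { unfold sg, FT. rewrite Hxi0, Heta0. unfold Rdiv. rewrite Rminus_diag, Rmult_0_l. auto. }
      assert (1 <= sg' c) by (apply Hge; lra). fold (sg u). nra.
  - assert (HG := G_sign x Hx Hs0 Hp u ltac:(lra)). unfold G in HG.
    assert (HP := Hpos' u Hu). assert (Hn := Hnz u Hu).
    set (p := phi (xi u x)) in *. set (F := FT x u) in *.
    assert (E : (F / p - s) * (p * phi x) = (F - s * p) * phi x) by (field; auto).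
    destruct (Rlt_le_dec (F / p - s) 0) as [h|h]; [lra|].
    assert (0 <= (F / p - s) * (p * phi x)) by (apply Rmult_le_pos; lra). lra.
Qed.


Lemma cont_phiT x p q : cont_on (fun t => phi (xi t x) * phi x) p q.
Proof.
  apply (deriv_cont_on _ (fun t => dphi (xi t x) * V1 (xi t x) (eta t x) * phi x)). intros t.
  apply (dmult (fun t => phi (xi t x)) (fun _ => phi x) t (dphi (xi t x) * V1 (xi t x) (eta t x)) 0).
  apply d_phiT. apply dconst; auto. ring.
Qed.

Lemma pos_along x : a <= x <= b -> 0 < s -> phi x <> 0 ->
  forall t, 0 <= t <= Rmin (t0 s x) 2 -> 0 < phi (xi t x) * phi x.
Proof.
  intros Hx Hs0 Hp t Ht.
  destruct (Rlt_le_dec 0 (phi (xi t x) * phi x)) as [h|h]; auto. exfalso.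
  assert (Hf0 : 0 < phi (xi 0 x) * phi x) by (rewrite Hxi0; apply Rsqr_pos_lt; auto).
  assert (Ht' : 0 < t). { destruct (Req_dec t 0) as [->|]; lra. }
  destruct (first_cross (fun t => phi (xi t x) * phi x) 0 t 0 Ht' (cont_phiT x 0 t) Hf0 h)
    as [r [Hr [Hfr Hbef]]].
  assert (Hm1 : Rmin (t0 s x) 2 <= t0 s x) by apply Rmin_l.
  assert (Hm2 : Rmin (t0 s x) 2 <= 2) by apply Rmin_r.
  assert (Hsig := sigma_facts x r Hx Hs0 Hp ltac:(lra) ltac:(lra) ltac:(lra) (fun u Hu => Hbef u Hu)).
  set (h2 := fun u => phi (xi u x) * phi (xi u x) - FT x u * FT x u).
  assert (Hh : 0 <= h2 r).
  { refine (closed_ge h2 0 r _ _ _); [lra| |].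
    - apply (deriv_cont_on _ (fun u => (dphi (xi u x) * V1 (xi u x) (eta u x)) * phi (xi u x) + phi (xi u x) * (dphi (xi u x) * V1 (xi u x) (eta u x)) - (dFT x u * FT x u + FT x u * dFT x u))).
      intros u. unfold h2. apply dminus with (lf := (dphi (xi u x) * V1 (xi u x) (eta u x)) * phi (xi u x) + phi (xi u x) * (dphi (xi u x) * V1 (xi u x) (eta u x))) (lg := dFT x u * FT x u + FT x u * dFT x u).
      apply (dmult (fun u => phi (xi u x)) (fun u => phi (xi u x)) u (dphi (xi u x) * V1 (xi u x) (eta u x)) (dphi (xi u x) * V1 (xi u x) (eta u x))); [apply d_phiT|apply d_phiT|ring].
      apply (dmult (FT x) (FT x) u (dFT x u) (dFT x u)); [apply d_FT|apply d_FT|ring]. ring.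
    - intros u Hu. destruct (Hsig u Hu) as [H1 H2].
      assert (Hn : phi (xi u x) <> 0). { intros E. assert (Z := Hbef u Hu). rewrite E in Z. lra. }
      unfold h2. set (p := phi (xi u x)) in *. set (F := FT x u) in *.
      assert (EF : F = (F / p) * p) by (field; auto). rewrite EF.
      set (sg := F / p) in *. assert (0 <= p * p) by apply Rle_0_sqr.
      assert (sg * sg <= 1) by nra. nra. }
  assert (Hpr : phi (xi r x) = 0).
  { apply Rmult_integral in Hfr. destruct Hfr; auto. contradiction. }
  unfold h2 in Hh. rewrite Hpr in Hh.
  assert (HF : FT x r = 0). { assert (0 <= FT x r * FT x r) by apply Rle_0_sqr. nra. }
  unfold FT in HF.
  assert (Hst := stay x r Hx ltac:(lra)).
  assert (Heq := uniq_back x (xi r x) r Hx Hst Hpr ltac:(lra) eq_refl ltac:(lra)).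
  apply Hp. rewrite Heq. auto.
Qed.

Lemma t0_le1 x : a <= x <= b -> 0 < s -> phi x <> 0 -> t0 s x <= 1.
Proof.
  intros Hx Hs0 Hp. destruct (Rle_lt_dec (t0 s x) 1) as [h|h]; auto. exfalso.
  set (r := Rmin (t0 s x) 2).
  assert (Hr : 1 < r). { unfold r, Rmin. destruct (Rle_dec _ _); lra. }
  assert (Hm1 : r <= t0 s x) by apply Rmin_l. assert (Hm2 : r <= 2) by apply Rmin_r.
  destruct (sigma_facts x r Hx Hs0 Hp ltac:(lra) Hm1 Hm2 (fun u Hu => pos_along x Hx Hs0 Hp u ltac:(unfold r in *; lra)) 1 ltac:(lra)).
  lra.
Qed.

Lemma pos_along' x : a <= x <= b -> 0 < s -> phi x <> 0 ->
  forall t, 0 <= t <= t0 s x -> 0 < phi (xi t x) * phi x.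
Proof.
  intros Hx Hs0 Hp t Ht. apply pos_along; auto.
  assert (H := t0_le1 x Hx Hs0 Hp). unfold Rmin. destruct (Rle_dec _ _); lra.
Qed.


Lemma t0_range x : a <= x <= b -> 0 < s -> 0 <= t0 s x <= 1.
Proof.
  intros Hx Hs0. destruct (Ht0 s x Hs Hx) as [H1 _]. split; auto.
  destruct (Req_dec (phi x) 0) as [h|h]. rewrite t0_zero; auto; lra. apply t0_le1; auto.
Qed.

Definition LG := Lam + Lw * Lam + s * Lp * Lam.

Lemma LG_pos : 0 <= LG.
Proof.
  unfold LG. destruct Hpos as [_ [HLw [_ [_ [_ [HLp _]]]]]]. assert (H := Lam_ge1).
  assert (0 <= Lw * Lam) by (apply Rmult_le_pos; lra).
  assert (0 <= s * Lp * Lam) by (apply Rmult_le_pos; [apply Rmult_le_pos|]; lra). lra.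
Qed.

Lemma G_lip x x' t : a <= x <= b -> a <= x' <= b -> 0 <= t <= 2 ->
  Rabs (G x' t - G x t) <= LG * Rabs (x' - x).
Proof.
  intros Hx Hx' Ht. destruct (unif_lip x' x t Hx' Hx Ht) as [H1 H2].
  assert (S1 := stay x t Hx ltac:(lra)). assert (S2 := stay x' t Hx' ltac:(lra)).
  destruct (Hb (xi t x') (xi t x) S2 S1) as [[_ Hw] [_ [[_ Hp] _]]].
  destruct Hpos as [_ [HLw [_ [_ [_ [HLp _]]]]]].
  unfold G, FT.
  replace (eta t x' - w (xi t x') - s * phi (xi t x') - (eta t x - w (xi t x) - s * phi (xi t x)))
    with ((eta t x' - eta t x) + - (w (xi t x') - w (xi t x)) + - (s * (phi (xi t x') - phi (xi t x)))) by ring.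
  eapply Rle_trans. apply Rabs_triang. eapply Rle_trans. apply Rplus_le_compat_r. apply Rabs_triang.
  rewrite !Rabs_Ropp, Rabs_mult, (Rabs_right s) by lra.
  set (D := Rabs (x' - x)) in *.
  assert (Rabs (w (xi t x') - w (xi t x)) <= Lw * (Lam * D)) by
    (eapply Rle_trans; [exact Hw| apply Rmult_le_compat_l; auto]).
  assert (s * Rabs (phi (xi t x') - phi (xi t x)) <= s * (Lp * (Lam * D))) by
    (apply Rmult_le_compat_l; [lra|]; eapply Rle_trans; [exact Hp| apply Rmult_le_compat_l; auto]).
  unfold LG. lra.
Qed.

Lemma sign_near x : phi x <> 0 -> exists d, 0 < d /\ forall x', Rabs (x' - x) < d -> 0 < phi x' * phi x.
Proof.
  intros Hp. destruct (cont_of phi dphi Hdphi x (Rabs (phi x)) (Rabs_pos_lt _ Hp)) as [d [Hd Hf]].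
  exists d. split; auto. intros x' Hx'.
  destruct (Req_dec x' x) as [->|hne]. apply Rsqr_pos_lt; auto.
  assert (H := Hf x' (conj (conj I (not_eq_sym hne)) Hx')). simpl in H. unfold R_dist in H.
  apply Rabs_def2 in H. destruct (Rle_lt_dec 0 (phi x)) as [h|h].
  - rewrite Rabs_right in H by lra. assert (0 < phi x) by (destruct h; auto; congruence). nra.
  - rewrite Rabs_left in H by lra. nra.
Qed.


Lemma dG_pos x : a <= x <= b -> 0 < s -> phi x <> 0 -> 0 < dG x (t0 s x) * phi x.
Proof.
  intros Hx Hs0 Hp. destruct (Ht0 s x Hs Hx) as [H1 [H2 _]].
  assert (HP := pos_along' x Hx Hs0 Hp (t0 s x) ltac:(lra)).
  set (tau := t0 s x) in *.
  assert (E : dG x tau = phi (xi tau x) * (1 + (dw (xi tau x) + s * dphi (xi tau x)) * (dw (xi tau x) + s * dphi (xi tau x)))).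
  { unfold dG, dFT, V1. rewrite H2. ring. }
  rewrite E. set (k := dw (xi tau x) + s * dphi (xi tau x)).
  assert (0 <= k * k) by apply Rle_0_sqr.
  replace (phi (xi tau x) * (1 + k * k) * phi x) with ((phi (xi tau x) * phi x) * (1 + k * k)) by ring.
  apply Rmult_lt_0_compat; lra.
Qed.

Lemma t0_pos x : a <= x <= b -> 0 < s -> phi x <> 0 -> 0 < t0 s x.
Proof.
  intros Hx Hs0 Hp. destruct (Ht0 s x Hs Hx) as [H1 [H2 _]].
  destruct (Req_dec (t0 s x) 0) as [h|h]; [|lra]. rewrite h, Hxi0, Heta0 in H2.
  assert (s * phi x = 0) by lra. apply Rmult_integral in H. destruct H; lra.
Qed.

Lemma t0_cont x : a <= x <= b -> 0 < s -> phi x <> 0 -> forall eps, 0 < eps ->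
  exists del, 0 < del /\ forall x', a <= x' <= b -> Rabs (x' - x) < del -> Rabs (t0 s x' - t0 s x) < eps.
Proof.
  intros Hx Hs0 Hp eps Heps.
  assert (Hr := t0_range x Hx Hs0). assert (Htp := t0_pos x Hx Hs0 Hp).
  set (tau := t0 s x) in *.
  set (H := fun x' t => G x' t * phi x).
  assert (HLG := LG_pos). assert (Hpx := Rabs_pos_lt _ Hp).
  set (cst := Rabs (phi x) * LG + 1).
  assert (Hcst : 0 < cst) by (unfold cst; assert (0 <= Rabs (phi x) * LG) by (apply Rmult_le_pos; lra); lra).
  assert (HHlip : forall x' t, a <= x' <= b -> 0 <= t <= 2 -> Rabs (H x' t - H x t) < cst * Rabs (x' - x) \/ x' = x).
  { intros x' t Hx' Ht. destruct (Req_dec x' x) as [e|ne]; [right; auto|left].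
    unfold H. replace (G x' t * phi x - G x t * phi x) with ((G x' t - G x t) * phi x) by ring.
    rewrite Rabs_mult. assert (Hd := Rabs_pos_lt (x' - x) ltac:(lra)).
    assert (Hg := G_lip x x' t Hx Hx' Ht).
    assert (Rabs (G x' t - G x t) * Rabs (phi x) <= LG * Rabs (x' - x) * Rabs (phi x)) by
      (apply Rmult_le_compat_r; [lra|auto]).
    unfold cst. nra. }
  destruct (sign_near x Hp) as [d1 [Hd1 Hsn]].
  assert (Hder : derivable_pt_lim (H x) tau (dG x tau * phi x)).
  { apply (dmult (G x) (fun _ => phi x) tau (dG x tau) 0). apply d_G. apply dconst; auto. ring. }
  assert (Hl := dG_pos x Hx Hs0 Hp). fold tau in Hl.
  destruct (Hder (dG x tau * phi x / 2) ltac:(lra)) as [dl Hdl].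
  set (h := Rmin dl (Rmin eps 1) / 2).
  assert (Hh : 0 < h /\ h < dl /\ h < eps /\ h < 1).
  { unfold h. assert (Hm := cond_pos dl). assert (Rmin eps 1 <= eps) by apply Rmin_l.
    assert (Rmin eps 1 <= 1) by apply Rmin_r. assert (Rmin dl (Rmin eps 1) <= dl) by apply Rmin_l.
    assert (Rmin dl (Rmin eps 1) <= Rmin eps 1) by apply Rmin_r.
    assert (0 < Rmin dl (Rmin eps 1)) by (apply Rmin_pos; [lra|apply Rmin_pos; lra]). lra. }
  assert (HHtau : H x tau = 0).
  { destruct (Ht0 s x Hs Hx) as [_ [H2 _]]. unfold H, G, FT. fold tau in H2. rewrite H2. ring. }
  assert (Hm1 : 0 < H x (tau + h)).
  { assert (X := Hdl h ltac:(lra) ltac:(rewrite Rabs_right; lra)). rewrite HHtau in X.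
    apply Rabs_def2 in X. destruct X as [_ X].
    assert (0 < H x (tau + h) / h) by lra.
    replace (H x (tau + h)) with (H x (tau + h) / h * h) by (field; lra). nra. }
  set (d2 := H x (tau + h) / cst).
  assert (Hd2 : 0 < d2) by (unfold d2; apply Rdiv_lt_0_compat; lra).
  assert (Hlow : exists d3, 0 < d3 /\ forall x', a <= x' <= b -> Rabs (x' - x) < d3 -> tau - eps < t0 s x').
  { destruct (Rlt_le_dec (tau - eps) 0) as [hq|hq].
    - exists 1. split; [lra|]. intros x' Hx' _. destruct (Ht0 s x' Hs Hx') as [Z _]. lra.
    - set (q := tau - eps).
      destruct (continuity_ab_maj (H x) 0 q ltac:(unfold q; lra)) as [tm [Htm Htm']].
      { intros c _. apply derivable_continuous_pt. exists (dG x c * phi x).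
        apply (dmult (G x) (fun _ => phi x) c (dG x c) 0). apply d_G. apply dconst; auto. ring. }
      assert (Hneg : H x tm < 0). { unfold H. apply G_sign; auto. fold tau. unfold q in *. lra. }
      exists (- H x tm / cst). split. apply Rdiv_lt_0_compat; lra.
      intros x' Hx' Hdx. destruct (Rlt_le_dec q (t0 s x')) as [hh|hh]; [exact hh|exfalso].
      destruct (Ht0 s x' Hs Hx') as [Z1 [Z2 _]].
      assert (Hle := Htm (t0 s x') ltac:(lra)).
      assert (HHz : H x' (t0 s x') = 0) by (unfold H, G, FT; rewrite Z2; ring).
      destruct (HHlip x' (t0 s x') Hx' ltac:(unfold q in *; lra)) as [Y|Y].
      + rewrite HHz in Y. apply Rabs_def2 in Y.
        assert (W : cst * Rabs (x' - x) < cst * (- H x tm / cst)) by (apply Rmult_lt_compat_l; auto).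
        replace (cst * (- H x tm / cst)) with (- H x tm) in W by (field; lra). lra.
      + subst x'. rewrite HHz in Hle. lra. }
  destruct Hlow as [d3 [Hd3 Hlow]].
  exists (Rmin d1 (Rmin d2 d3)). split.
  { apply Rmin_pos; auto. apply Rmin_pos; auto. }
  intros x' Hx' Hdx.
  assert (Rmin d1 (Rmin d2 d3) <= d1) by apply Rmin_l.
  assert (Rmin d1 (Rmin d2 d3) <= Rmin d2 d3) by apply Rmin_r.
  assert (Rmin d2 d3 <= d2) by apply Rmin_l. assert (Rmin d2 d3 <= d3) by apply Rmin_r.
  assert (Hlo := Hlow x' Hx' ltac:(lra)).
  assert (Hup : t0 s x' <= tau + h).
  { assert (Hpos1 : 0 < H x' (tau + h)).
    { destruct (HHlip x' (tau + h) Hx' ltac:(lra)) as [Y|Y]; [|subst; auto].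
      apply Rabs_def2 in Y. assert (W : cst * Rabs (x' - x) < cst * d2) by (apply Rmult_lt_compat_l; lra).
      unfold d2 in W. replace (cst * (H x (tau + h) / cst)) with (H x (tau + h)) in W by (field; lra). lra. }
    assert (H0' : H x' 0 <= 0).
    { unfold H, G, FT. rewrite Hxi0, Heta0. assert (Z := Hsn x' ltac:(lra)).
      assert (0 <= s * (phi x' * phi x)) by (apply Rmult_le_pos; lra). nra. }
    destruct (ivt (H x') 0 (tau + h)) as [r [Hr0 Hr1]]; try lra.
    { apply (deriv_cont_on _ (fun t => dG x' t * phi x)). intros c.
      apply (dmult (G x') (fun _ => phi x) c (dG x' c) 0). apply d_G. apply dconst; auto. ring. }
    destruct (Rle_lt_dec (t0 s x') r) as [hh|hh]; [lra|exfalso].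
    destruct (Ht0 s x' Hs Hx') as [_ [_ Z3]]. apply (Z3 r); [lra|].
    unfold H, G, FT in Hr1. apply Rmult_integral in Hr1. destruct Hr1; [lra|contradiction]. }
  apply Rabs_def1; lra.
Qed.


Lemma g_cont : 0 < s -> cont_on (fun x => xi (t0 s x) x) a b.
Proof.
  intros Hs0 x Hx eps Heps. assert (HL := Lam_ge1).
  destruct (Req_dec (phi x) 0) as [hp|hp].
  - exists (eps / Lam). split. apply Rdiv_lt_0_compat; lra.
    intros x' Hx' Hd. rewrite (t0_zero x Hx (or_introl hp)), Hxi0.
    assert (Hr := t0_range x' Hx' Hs0).
    destruct (stationary x (t0 s x') Hx hp ltac:(lra)) as [Hst _].
    assert (E : xi (t0 s x') x' - x = xi (t0 s x') x' - xi (t0 s x') x) by (rewrite Hst; ring).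
    rewrite E. eapply Rle_lt_trans. apply (unif_lip x' x); auto; lra.
    assert (W : Lam * Rabs (x' - x) < Lam * (eps / Lam)) by (apply Rmult_lt_compat_l; lra).
    replace (Lam * (eps / Lam)) with eps in W by (field; lra). exact W.
  - assert (Hr := t0_range x Hx Hs0).
    destruct (deriv_cont_on (fun t => xi t x) (fun t => V1 (xi t x) (eta t x)) 0 2 (Hxi x)
      (t0 s x) ltac:(lra) (eps / 2) ltac:(lra)) as [g [Hg Hgf]].
    destruct (t0_cont x Hx Hs0 hp g Hg) as [d0 [Hd0 Hd0f]].
    exists (Rmin d0 (eps / (2 * Lam))). split.
    { apply Rmin_pos; auto. apply Rdiv_lt_0_compat; lra. }
    intros x' Hx' Hd.
    assert (Rmin d0 (eps / (2 * Lam)) <= d0) by apply Rmin_l.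
    assert (Rmin d0 (eps / (2 * Lam)) <= eps / (2 * Lam)) by apply Rmin_r.
    assert (Hr' := t0_range x' Hx' Hs0).
    assert (Ht := Hd0f x' Hx' ltac:(lra)).
    replace (xi (t0 s x') x' - xi (t0 s x) x) with
      ((xi (t0 s x') x' - xi (t0 s x') x) + (xi (t0 s x') x - xi (t0 s x) x)) by ring.
    eapply Rle_lt_trans. apply Rabs_triang.
    assert (A1 := proj1 (unif_lip x' x (t0 s x') Hx' Hx ltac:(lra))).
    assert (A2 := Hgf (t0 s x') ltac:(lra) Ht).
    assert (W : Lam * Rabs (x' - x) < Lam * (eps / (2 * Lam))) by (apply Rmult_lt_compat_l; lra).
    replace (Lam * (eps / (2 * Lam))) with (eps / 2) in W by (field; lra). lra.
Qed.

Lemma main_inner :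
  (forall x, a <= x <= b -> exists y, a <= y <= b /\
      xi (t0 s x) x = y /\ eta (t0 s x) x = w y + s * phi y) /\
  (forall y, a <= y <= b -> exists x, a <= x <= b /\
      xi (t0 s x) x = y /\ eta (t0 s x) x = w y + s * phi y).
Proof.
  split.
  - intros x Hx. destruct (Ht0 s x Hs Hx) as [H1 [H2 _]].
    exists (xi (t0 s x) x). split; [apply stay; auto|split; auto].
  - intros y Hy.
    assert (Hfix : forall z, a <= z <= b -> (phi z = 0 \/ s = 0) ->
       a <= z <= b /\ xi (t0 s z) z = z /\ eta (t0 s z) z = w z + s * phi z).
    { intros z Hz Hc. rewrite (t0_zero z Hz Hc), Hxi0, Heta0. split; auto. split; auto.
      destruct Hc as [Hc|Hc]; rewrite Hc; ring. }
    destruct (Req_dec s 0) as [hs|hs]. { exists y. apply Hfix; auto. }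
    assert (Hs0 : 0 < s) by lra.
    destruct (Req_dec y b) as [->|hb].
    { exists b. apply Hfix. lra. left. rewrite Hphi_in by lra. auto. }
    assert (Hga : xi (t0 s a) a = a).
    { rewrite t0_zero, Hxi0; auto. lra. left. rewrite Hphi_in by lra. auto. }
    assert (Hgb : xi (t0 s b) b = b).
    { rewrite t0_zero, Hxi0; auto. lra. left. rewrite Hphi_in by lra. auto. }
    destruct (ivt (fun x => xi (t0 s x) x - y) a b) as [x [Hx Hgx]]; try lra.
    { intros t Ht e He. destruct (g_cont Hs0 t Ht e He) as [d [Hd Hf]]. exists d; split; auto.
      intros t' Ht' Hdt. replace (xi (t0 s t') t' - y - (xi (t0 s t) t - y)) with
        (xi (t0 s t') t' - xi (t0 s t) t) by ring. auto. }
    exists x. split; auto. split. lra.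
    destruct (Ht0 s x Hs Hx) as [_ [H2 _]]. rewrite H2. f_equal; f_equal; f_equal; lra.
Qed.

End Inner.

Lemma main_sec : forall (xi eta : R -> R -> R)
  (Hxi : forall x t, derivable_pt_lim (fun t => xi t x) t
           (- dw (xi t x) * phi (xi t x) - (eta t x - w (xi t x)) * dphi (xi t x)))
  (Heta : forall x t, derivable_pt_lim (fun t => eta t x) t (phi (xi t x)))
  (Hxi0 : forall x, xi 0 x = x)
  (Heta0 : forall x, eta 0 x = w x)
  (t0 : R -> R -> R)
  (Ht0 : forall s x, 0 <= s <= 1 -> a <= x <= b ->
      0 <= t0 s x /\
      eta (t0 s x) x = w (xi (t0 s x) x) + s * phi (xi (t0 s x) x) /\
      (forall t, 0 <= t < t0 s x -> eta t x <> w (xi t x) + s * phi (xi t x)))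
  (s : R) (Hs : 0 <= s <= 1),
  (forall x, a <= x <= b -> exists y, a <= y <= b /\
      xi (t0 s x) x = y /\ eta (t0 s x) x = w y + s * phi y) /\
  (forall y, a <= y <= b -> exists x, a <= x <= b /\
      xi (t0 s x) x = y /\ eta (t0 s x) x = w y + s * phi y).
Proof.
  intros. destruct bounds as [Mw [Lw [Mdw [Ldw [Mp [Lp [Md [Ld [H1 [H2 [H3 [H4 [H5 [H6 [H7 [H8 HB]]]]]]]]]]]]]]]].
  eapply main_inner; eauto. repeat split; auto.
Qed.

End Main.

Theorem theorem3p6
  (w dw d2w d3w : R -> R)
  (* w in C^3(R) *)
  (Hdw : forall x, derivable_pt_lim w x (dw x))
  (Hd2w : forall x, derivable_pt_lim dw x (d2w x))
  (Hd3w : forall x, derivable_pt_lim d2w x (d3w x))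
  (Hd3c : forall x, continuity_pt d3w x)
  (* w periodic *)
  (Hper : exists T, 0 < T /\ forall x, w (x + T) = w x)
  (* w > 0 on [-1,1] *)
  (Hpos : forall x, -1 <= x <= 1 -> 0 < w x)
  (a b : R) (Hab : -1 < a /\ a < b /\ b < 1)
  (* phi : polynomial on [a,b], extended by zero *)
  (phi dphi : R -> R) (coef : list R)
  (Hphi_in : forall x, a <= x <= b -> phi x = poly_eval coef x)
  (Hphi_out : forall x, (x < a \/ b < x) -> phi x = 0)
  (Hpoly_d : exists P1 P2 P3 : R -> R,
      (forall x, derivable_pt_lim (poly_eval coef) x (P1 x)) /\
      (forall x, derivable_pt_lim P1 x (P2 x)) /\
      (forall x, derivable_pt_lim P2 x (P3 x)) /\
      poly_eval coef a = 0 /\ P1 a = 0 /\ P2 a = 0 /\ P3 a = 0 /\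
      poly_eval coef b = 0 /\ P1 b = 0 /\ P2 b = 0 /\ P3 b = 0)
  (* phi' : derivative of the extended phi *)
  (Hdphi : forall x, derivable_pt_lim phi x (dphi x))
  (* (xi(.,x), eta(.,x)) : the global solution of the ODE system *)
  (xi eta : R -> R -> R)
  (Hxi : forall x t, derivable_pt_lim (fun t => xi t x) t
           (- dw (xi t x) * phi (xi t x) - (eta t x - w (xi t x)) * dphi (xi t x)))
  (Heta : forall x t, derivable_pt_lim (fun t => eta t x) t (phi (xi t x)))
  (Hxi0 : forall x, xi 0 x = x)
  (Heta0 : forall x, eta 0 x = w x)
  (* t0(s,x) : first time t >= 0 with eta = w(xi) + s phi(xi) *)
  (t0 : R -> R -> R)
  (Ht0 : forall s x, 0 <= s <= 1 -> a <= x <= b ->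
      0 <= t0 s x /\
      eta (t0 s x) x = w (xi (t0 s x) x) + s * phi (xi (t0 s x) x) /\
      (forall t, 0 <= t < t0 s x -> eta t x <> w (xi t x) + s * phi (xi t x)))
  (s : R) (Hs : 0 <= s <= 1) :
  (forall x, a <= x <= b -> exists y, a <= y <= b /\
      xi (t0 s x) x = y /\ eta (t0 s x) x = w y + s * phi y) /\
  (forall y, a <= y <= b -> exists x, a <= x <= b /\
      xi (t0 s x) x = y /\ eta (t0 s x) x = w y + s * phi y).
Proof.
  destruct Hpoly_d as [P1 [P2 [P3 [HP1 [HP2 [HP3 [Ha0 [Ha1 [_ [_ [Hb0 [Hb1 _]]]]]]]]]]]].
  exact (main_sec w dw d2w d3w Hdw Hd2w Hd3w a b Hab phi dphi (poly_eval coef) P1 P2 P3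
    Hphi_in Hphi_out HP1 HP2 HP3 Ha0 Ha1 Hb0 Hb1 Hdphi xi eta Hxi Heta Hxi0 Heta0 t0 Ht0 s Hs).
Qed.
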